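(* Let $N\in\mathbb{N}$, $N\geqslant2$, and let $f:[0,1]\times\mathbb{R}\to\mathbb{R}$ be such that there exist positive constants $A,B$ with $A<1$ and $|f(t,x)|\leqslant A|x|+B$ for all $t\in[0,1]$, $x\in\mathbb{R}$. Then the functional $\mathbb{E}_N\ni x\mapsto\|D_Nx\|_N$ is coercive with respect to $\|\cdot\|_{\mathbb{E}_N}$, i.e. $\|D_Nx\|_N\to\infty$ as $\|x\|_{\mathbb{E}_N}\to\infty$.
   Context: $\mathbb{E}_N$ is the space of $x:\{0,\dots,N\}\to\mathbb{R}$ with $x(0)=x(N)=0$. $\Delta x(k-1)=x(k)-x(k-1)$, $\Delta^2x(k-1)=x(k+1)-2x(k)+x(k-1)$. $\|x\|_N=(\sum_{i=1}^{N-1}|x(i)|^2)^{1/2}$, $\|x\|_{\mathbb{E}_N}=(\sum_{i=1}^{N-1}|\Delta^2x(i-1)|^2)^{1/2}$. $(D_Nx)(k)=\Delta^2x(k-1)-\frac{1}{N^2}f(\frac kN,x(k))$ for $k=1,\dots,N-1$, $(D_Nx)(0)=(D_Nx)(N)=0$. *)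

(* Defs.v *)
From Stdlib Require Import Reals List.
Import ListNotations.
Open Scope R_scope.

Definition sum1 (N : nat) (g : nat -> R) : R :=
  fold_right Rplus 0 (map g (seq 1 (N - 1))).

(* x belongs to E_N : x : {0..N} -> R with x 0 = x N = 0
   (values of x outside {0..N} are irrelevant). *)
Definition in_EN (N : nat) (x : nat -> R) : Prop := x 0%nat = 0 /\ x N = 0.

(* Delta^2 x (k-1) = x(k+1) - 2 x(k) + x(k-1) *)
Definition delta2 (x : nat -> R) (k : nat) : R :=
  x (S k) - 2 * x k + x (Nat.pred k).

Definition normN (N : nat) (x : nat -> R) : R :=
  sqrt (sum1 N (fun i => Rsqr (Rabs (x i)))).

Definition normEN (N : nat) (x : nat -> R) : R :=
  sqrt (sum1 N (fun i => Rsqr (Rabs (delta2 x i)))).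

Definition DN (N : nat) (f : R -> R -> R) (x : nat -> R) (k : nat) : R :=
  if ((1 <=? k)%nat && (k <=? N - 1)%nat)%bool
  then delta2 x k - / (INR N)^2 * f (INR k / INR N) (x k)
  else 0.

(* Main.v *)
Require Import Defs.
From Stdlib Require Import Reals Lra Lia Psatz List.
Import ListNotations.
Open Scope R_scope.

Fixpoint s1 (g : nat -> R) (n : nat) : R :=
  match n with O => 0 | S m => s1 g m + g (S m) end.



Lemma fold_app_R (l : list R) c : fold_right Rplus c l = fold_right Rplus 0 l + c.
Proof. induction l; simpl; lra. Qed.

Lemma sum1_s1 N g : sum1 N g = s1 g (N - 1).
Proof.
  unfold sum1. generalize (N-1)%nat as n. induction n as [|n IH]; [reflexivity|].
  rewrite seq_S, map_app, fold_right_app. simpl. rewrite fold_app_R, IH.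
  replace (1 + n)%nat with (S n) by lia. lra.
Qed.

Lemma s1_ext g h n : (forall i, (1 <= i <= n)%nat -> g i = h i) -> s1 g n = s1 h n.
Proof. induction n; intros H; simpl; auto. rewrite IHn, H; auto; try lia; intros; apply H; lia. Qed.

Lemma s1_le g h n : (forall i, (1 <= i <= n)%nat -> g i <= h i) -> s1 g n <= s1 h n.
Proof. induction n; intros H; simpl; [lra|]. assert (H1 := H (S n) ltac:(lia)).
  assert (s1 g n <= s1 h n) by (apply IHn; intros; apply H; lia). lra. Qed.

Lemma s1_const_le g c n : (forall i, (1 <= i <= n)%nat -> g i <= c) -> s1 g n <= INR n * c.
Proof. induction n; intros H; cbn [s1]; [simpl; lra|]. rewrite S_INR. assert (H1 := H (S n) ltac:(lia)).
  assert (s1 g n <= INR n * c) by (apply IHn; intros; apply H; lia). lra. Qed.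

Lemma s1_const_ge g c n : (forall i, (1 <= i <= n)%nat -> c <= g i) -> INR n * c <= s1 g n.
Proof. induction n; intros H; cbn [s1]; [simpl; lra|]. rewrite S_INR. assert (H1 := H (S n) ltac:(lia)).
  assert (INR n * c <= s1 g n) by (apply IHn; intros; apply H; lia). lra. Qed.

Lemma s1_nonneg g n : (forall i, (1 <= i <= n)%nat -> 0 <= g i) -> 0 <= s1 g n.
Proof. intros H. replace 0 with (INR n * 0) by ring. apply s1_const_ge; auto. Qed.

Lemma s1_mono g m n : (forall i, 0 <= g i) -> (m <= n)%nat -> s1 g m <= s1 g n.
Proof. intros H Hmn. induction Hmn; [lra|]. simpl. specialize (H (S m0)). lra. Qed.

Lemma s1_lin g h p q n : s1 (fun i => p * g i + q * h i) n = p * s1 g n + q * s1 h n.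
Proof. induction n; simpl; [ring|]. rewrite IHn. ring. Qed.

Lemma s1_CS a b n : Rsqr (s1 (fun i => a i * b i) n) <=
   s1 (fun i => Rsqr (a i)) n * s1 (fun i => Rsqr (b i)) n.
Proof.
  induction n; simpl. unfold Rsqr; lra.
  set (s := s1 (fun i => a i * b i) n) in *.
  set (P := s1 (fun i => Rsqr (a i)) n) in *.
  set (Q := s1 (fun i => Rsqr (b i)) n) in *.
  assert (HP : 0 <= P) by (apply s1_nonneg; intros; apply Rle_0_sqr).
  assert (HQ : 0 <= Q) by (apply s1_nonneg; intros; apply Rle_0_sqr).
  set (u := a (S n)) ; set (v := b (S n)).
  unfold Rsqr in *.
  assert (H1 : 0 <= P * (v*v) + Q * (u*u)) by nra.
  assert (H2 : Rsqr (2 * s * u * v) <= Rsqr (P * (v*v) + Q * (u*u))).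
  { unfold Rsqr. assert (0 <= (P*(v*v) - Q*(u*u))^2) by apply pow2_ge_0.
    assert (s*s*(u*v*(u*v)) <= P*Q*(u*v*(u*v))).
    { apply Rmult_le_compat_r. apply Rle_0_sqr. exact IHn. }
    replace ((P * (v * v) + Q * (u * u)) * (P * (v * v) + Q * (u * u))) with
      ((P*(v*v) - Q*(u*u))^2 + 4 * (P*Q*(u*v*(u*v)))) by ring.
    replace (2 * s * u * v * (2 * s * u * v)) with (4 * (s*s*(u*v*(u*v)))) by ring. lra. }
  apply Rsqr_le_abs_0 in H2. rewrite (Rabs_right (_ + _)) in H2 by lra.
  assert (2*s*u*v <= P * (v*v) + Q * (u*u)) by (eapply Rle_trans; [apply Rle_abs|]; exact H2).
  nra.
Qed.

Lemma Rabs_le_between a b : Rabs a <= b -> - b <= a <= b.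
Proof. intros H. pose proof (Rle_abs a). pose proof (Rle_abs (-a)). rewrite Rabs_Ropp in *. lra. Qed.
Section Main.
Variable x : nat -> R.
Let y j := x j - x (pred j).
Let ad i := Rabs (delta2 x i).

Lemma d_y i : delta2 x (S i) = y (S (S i)) - y (S i).
Proof. unfold delta2, y. cbn [pred]. lra. Qed.

Lemma y_tel j k : Rabs (y (S j + k) - y (S j)) <= s1 ad (j + k) - s1 ad j.
Proof.
  induction k.
  - rewrite !Nat.add_0_r. unfold Rminus. rewrite !Rplus_opp_r, Rabs_R0. lra.
  - replace (S j + S k)%nat with (S (S (j + k))) by lia.
    replace (j + S k)%nat with (S (j + k)) by lia. cbn [s1].
    replace (S j + k)%nat with (S (j+k)) in IHk by lia.
    replace (y (S (S (j + k))) - y (S j)) with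
      ((y (S (S (j + k))) - y (S (j+k))) + (y (S (j + k)) - y (S j))) by ring.
    rewrite <- d_y. eapply Rle_trans; [apply Rabs_triang|]. change (Rabs (delta2 x (S (j+k)))) with (ad (S (j+k))). lra.
Qed.

Lemma ad_nn i : 0 <= ad i.
Proof. apply Rabs_pos. Qed.

Lemma y_diff n j m : (1 <= j <= S n)%nat -> (1 <= m <= S n)%nat -> Rabs (y m - y j) <= s1 ad n.
Proof.
  intros Hj Hm.
  assert (Hmon := s1_mono ad). assert (H0 : s1 ad 0 = 0) by reflexivity.
  destruct (Nat.le_gt_cases j m).
  - destruct j as [|j']; [lia|]. 
    replace m with (S j' + (m - S j'))%nat by lia.
    eapply Rle_trans; [apply y_tel|].
    assert (s1 ad (j' + (m - S j')) <= s1 ad n) by (apply Hmon; [apply ad_nn| lia]).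
    assert (s1 ad 0 <= s1 ad j') by (apply Hmon; [apply ad_nn| lia]). lra.
  - rewrite Rabs_minus_sym. destruct m as [|m']; [lia|].
    replace j with (S m' + (j - S m'))%nat by lia.
    eapply Rle_trans; [apply y_tel|].
    assert (s1 ad (m' + (j - S m')) <= s1 ad n) by (apply Hmon; [apply ad_nn| lia]).
    assert (s1 ad 0 <= s1 ad m') by (apply Hmon; [apply ad_nn| lia]). lra.
Qed.

Lemma s1_y m : s1 y m = x m - x 0.
Proof. induction m; cbn [s1]; [ring|]. rewrite IHm. unfold y. simpl. ring. Qed.

Lemma y_bound n : in_EN (S n) x -> forall j, (1 <= j <= S n)%nat -> Rabs (y j) <= s1 ad n.
Proof.
  intros [H0 HN] j Hj.
  assert (Hs : s1 y (S n) = 0) by (rewrite s1_y, H0, HN; ring).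
  assert (A1 : INR (S n) * (y j - s1 ad n) <= s1 y (S n)).
  { apply s1_const_ge. intros m Hm. assert (H := y_diff n j m Hj Hm).
    apply Rabs_le_between in H. lra. }
  assert (A2 : s1 y (S n) <= INR (S n) * (y j + s1 ad n)).
  { apply s1_const_le. intros m Hm. assert (H := y_diff n j m Hj Hm).
    apply Rabs_le_between in H. lra. }
  assert (Hp : 0 < INR (S n)) by (apply lt_0_INR; lia).
  apply Rabs_le. split; nra.
Qed.

Lemma x_bound n : in_EN (S n) x -> forall k, (k <= S n)%nat -> Rabs (x k) <= INR k * s1 ad n.
Proof.
  intros HE k. induction k; intros Hk.
  - destruct HE as [H0 _]. rewrite H0, Rabs_R0. simpl. lra.
  - rewrite S_INR. replace (x (S k)) with (x k + y (S k)) by (unfold y; simpl; ring).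
    eapply Rle_trans; [apply Rabs_triang|].
    assert (Rabs (y (S k)) <= s1 ad n) by (apply y_bound; auto; lia).
    assert (Rabs (x k) <= INR k * s1 ad n) by (apply IHk; lia). lra.
Qed.

End Main.

Lemma sqrt_sq_le a b : 0 <= b -> Rsqr a <= b -> a <= sqrt b.
Proof. intros Hb H. eapply Rle_trans; [apply Rle_abs|]. rewrite <- sqrt_Rsqr_abs.
  apply sqrt_le_1_alt. exact H. Qed.

Theorem lemma11 (N : nat) (f : R -> R -> R) :
  (2 <= N)%nat ->
  (exists A B : R, 0 < A /\ A < 1 /\ 0 < B /\
     forall t x : R, 0 <= t <= 1 -> Rabs (f t x) <= A * Rabs x + B) ->
  forall M : R, exists K : R, forall x : nat -> R,
    in_EN N x -> K <= normEN N x -> M <= normN N (DN N f x).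
Proof.
  intros HN [A [B [HA0 [HA1 [HB Hf]]]]] M.
  destruct N as [|n]; [lia|].
  assert (Hn1 : (1 <= n)%nat) by lia.
  set (Nr := INR (S n)). set (nr := INR n). set (r := sqrt nr).
  assert (Hnr : 1 <= nr) by (apply (le_INR 1); lia).
  assert (HNr : Nr = nr + 1) by (apply S_INR).
  assert (Hr2 : r * r = nr) by (apply sqrt_sqrt; lra).
  assert (Hr0 : 0 <= r) by apply sqrt_pos.
  assert (HN2 : 0 < Nr ^ 2) by (simpl; nra).
  set (th := A * nr * nr / Nr ^ 2).
  assert (Hth : th < 1).
  { unfold th. apply (Rmult_lt_reg_r (Nr^2)); auto. unfold Rdiv. rewrite Rmult_assoc, Rinv_l by lra.
    simpl. nra. }
  exists ((Rabs M + r * B / Nr ^ 2) / (1 - th)).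
  intros x HE HK.
  unfold normEN, normN in *. rewrite !sum1_s1 in *. replace (S n - 1)%nat with n in * by lia.
  set (d := delta2 x) in *.
  set (S0 := s1 (fun i => Rabs (d i)) n).
  set (P := s1 (fun i => Rsqr (Rabs (d i))) n) in *.
  assert (HP : 0 <= P) by (apply s1_nonneg; intros; apply Rle_0_sqr).
  assert (HS0 : 0 <= S0) by (apply s1_nonneg; intros; apply Rabs_pos).
  set (E := sqrt P) in *.
  assert (HSE : S0 <= r * E).
  { assert (H := s1_CS (fun i => Rabs (d i)) (fun _ => 1) n).
    rewrite (s1_ext (fun i => Rabs (d i) * 1) (fun i => Rabs (d i))) in H by (intros; ring).
    assert (H1 : s1 (fun _ => Rsqr 1) n = nr).
    { apply Rle_antisym.
      - replace nr with (nr * 1) by ring. apply s1_const_le. intros; unfold Rsqr; lra.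
      - replace nr with (nr * 1) at 1 by ring. apply s1_const_ge. intros; unfold Rsqr; lra. }
    rewrite H1 in H. fold S0 P in H.
    unfold r, E. rewrite <- sqrt_mult by lra. apply sqrt_sq_le. nra. lra. }
  set (b := fun k => / Nr ^ 2 * f (INR k / Nr) (x k)).
  set (beta := (A * nr * S0 + B) / Nr ^ 2).
  assert (Hb : forall k, (1 <= k <= n)%nat -> Rabs (b k) <= beta).
  { intros k Hk. unfold b, beta.
    assert (Hk0 : 0 <= INR k / Nr).
    { unfold Rdiv. apply Rmult_le_pos; [apply pos_INR| apply Rlt_le, Rinv_0_lt_compat; lra]. }
    assert (Hk1 : INR k / Nr <= 1).
    { apply (Rmult_le_reg_r Nr); [lra|]. unfold Rdiv. rewrite Rmult_assoc, Rinv_l by lra.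
      rewrite Rmult_1_r, Rmult_1_l. apply le_INR; lia. }
    assert (Hfk := Hf _ (x k) (conj Hk0 Hk1)).
    assert (Hxk := x_bound x n HE k ltac:(lia)). fold d S0 in Hxk.
    assert (Hkn : INR k <= nr) by (apply le_INR; lia).
    rewrite Rabs_mult, Rabs_inv, (Rabs_right (Nr^2)) by lra.
    unfold Rdiv. rewrite Rmult_comm. apply Rmult_le_compat_r.
    - apply Rlt_le, Rinv_0_lt_compat; lra.
    - assert (INR k * S0 <= nr * S0) by (apply Rmult_le_compat_r; lra). nra. }
  assert (Hbeta : 0 <= beta).
  { unfold beta. unfold Rdiv. apply Rmult_le_pos; [|apply Rlt_le, Rinv_0_lt_compat; lra].
    assert (0 <= A * nr * S0) by (apply Rmult_le_pos; [nra|lra]). lra. }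
  set (Q := s1 (fun i => Rsqr (b i)) n).
  assert (HQ0 : 0 <= Q) by (apply s1_nonneg; intros; apply Rle_0_sqr).
  assert (HQ : sqrt Q <= r * beta).
  { unfold r. rewrite <- (sqrt_Rsqr beta) by lra. rewrite <- sqrt_mult by (try lra; apply Rle_0_sqr).
    apply sqrt_le_1_alt. apply s1_const_le. intros k Hk.
    cbv beta. rewrite (Rsqr_abs (b k)). apply Rsqr_incr_1; auto using Rabs_pos. }
  set (C := s1 (fun i => d i * b i) n).
  assert (HC : C <= E * sqrt Q).
  { assert (H := s1_CS d b n). fold C Q in H.
    rewrite (s1_ext (fun i => Rsqr (d i)) (fun i => Rsqr (Rabs (d i)))) in H
      by (intros; apply Rsqr_abs). fold P in H.
    unfold E. rewrite <- sqrt_mult by lra. apply sqrt_sq_le; [nra|exact H]. }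
  rewrite (s1_ext _ (fun i => 1 * (1 * Rsqr (Rabs (d i)) + (-2) * (d i * b i)) + 1 * Rsqr (b i))).
  2:{ intros i Hi. unfold DN.
      replace ((1 <=? i)%nat && (i <=? S n - 1)%nat)%bool with true.
      2:{ symmetry. apply andb_true_intro; split; apply Nat.leb_le; lia. }
      rewrite <- !Rsqr_abs. unfold Rsqr. fold d. unfold b, Nr. ring. }
  rewrite !s1_lin. fold P C Q.
  assert (HEP : E * E = P) by (apply sqrt_sqrt; lra).
  assert (HE0 : 0 <= E) by apply sqrt_pos.
  assert (HsQ : sqrt Q * sqrt Q = Q) by (apply sqrt_sqrt; lra).
  assert (HsQ0 : 0 <= sqrt Q) by apply sqrt_pos.
  assert (Hmain : Rabs M <= E - sqrt Q).
  { assert (H1 : sqrt Q <= (A * nr * nr * E + r * B) / Nr ^ 2).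
    { eapply Rle_trans; [exact HQ|]. unfold beta. unfold Rdiv.
      rewrite <- Rmult_assoc. apply Rmult_le_compat_r; [apply Rlt_le, Rinv_0_lt_compat; lra|].
      assert (A * nr * (r * S0) <= A * nr * (r * (r * E))).
      { apply Rmult_le_compat_l; [nra|]. apply Rmult_le_compat_l; lra. }
      replace (A * nr * nr * E) with (A * nr * (r * (r * E))) by (rewrite <- Hr2; ring). nra. }
    assert (H2 : (Rabs M + r * B / Nr ^ 2) <= (1 - th) * E).
    { apply (Rmult_le_reg_r (/ (1 - th))). apply Rinv_0_lt_compat; lra.
      replace ((1 - th) * E * / (1 - th)) with E by (field; lra). exact HK. }
    unfold th in H2. unfold Rdiv in *. 
    replace ((A * nr * nr * E + r * B) * / Nr ^ 2) with (A * nr * nr * / Nr ^ 2 * E + r * B * / Nr^2) in H1 by ring.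
    set (t := A * nr * nr * / Nr ^ 2) in *. set (u := r * B * / Nr ^ 2) in *. clearbody t u. clear -H1 H2. nra. }
  apply Rle_trans with (Rabs M); [apply Rle_abs|].
  assert (Hx : (E - sqrt Q) * (E - sqrt Q) <= 1 * (1 * P + -2 * C) + 1 * Q).
  { replace ((E - sqrt Q) * (E - sqrt Q)) with (E*E - 2 * (E * sqrt Q) + sqrt Q * sqrt Q) by ring.
    rewrite HEP, HsQ. lra. }
  assert (0 <= Rabs M) by apply Rabs_pos.
  apply sqrt_sq_le. 
  - assert (0 <= (E - sqrt Q) * (E - sqrt Q)) by (apply Rle_0_sqr). lra.
  - unfold Rsqr. assert (Rabs M * Rabs M <= (E - sqrt Q) * (E - sqrt Q)) by (apply Rmult_le_compat; lra). lra.
Qed.
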